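(* The linear space $L^{(d-1)}$ is a relative $W_d(\mathbb C)$-section for the action of $O_d(\mathbb C)$ on $V$. More precisely, there exist rational invariants $f_1,\dots,f_d\in\mathbb C(V)^{O_d(\mathbb C)}$ such that, setting $$U_d(\mathbb C)=\Big\{(v,M)\in V:\ (v,M)\text{ is in the domain of each }f_k\text{ and }\prod_{k=1}^df_k(v,M)\neq0\Big\},$$ which is an invariant non-empty Zariski-open subset of $V$, the space $L^{(d-1)}$ intersects each orbit contained in $U_d(\mathbb C)$. Furthermore: $f_1=c_1^2+\dots+c_d^2$; $f_i|_{L^{(i-1)}}=c_{1(d-i+2)}^2+\dots+c_{(d-i+1)(d-i+2)}^2$ for $2\le i<d$; and $f_d|_{L^{(d-1)}}=c_{12}^2$.
   Context: Fix $d\ge2$. $V=\mathbb C^d\oplus\mathfrak{so}(d,\mathbb C)$ has elements $(v,M)$ with $v=(c_1,\dots,c_d)^\top$ and $M$ complex skew-symmetric with $M_{ij}=c_{ij}=-M_{ji}$ for $i<j$. $O_d(\mathbb C)=\{A\in\mathbb C^{d\times d}:AA^\top=I\}$ acts by $A\cdot(v,M)=(Av,AMA^\top)$. $L^{(1)}=\{(v,M):c_1=\dots=c_{d-1}=0\}$ and for $2\le i\le d-1$, $L^{(i)}=\{(v,M)\in L^{(i-1)}:c_{k(d-i+2)}=0,\ 1\le k\le d-i\}$; so $L^{(d-1)}$ consists of $(v,M)$ with $v=(0,\dots,0,c_d)$ and only $c_{12},c_{23},\dots,c_{(d-1)d}$ possibly nonzero in $M$. $W_d(\mathbb C)\subset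 O_d(\mathbb C)$ is the group of diagonal matrices with diagonal entries in $\{-1,1\}$. For a subgroup $N\subset G$ of a group acting rationally on a variety $X$, a subvariety $S\subset X$ is a relative $N$-section if there is a non-empty, $G$-invariant, Zariski-open $U\subset X$ such that $S$ intersects each orbit contained in $U$, and $N=\{n\in G:nS=S\}$. $\mathbb C(V)^{O_d(\mathbb C)}$ denotes the field of $O_d(\mathbb C)$-invariant rational functions on $V$. *)

(* Defs.v *)
From mathcomp Require Import all_boot all_algebra.
From mathcomp Require Import complex.
From mathcomp Require Import Rstruct.

Set Implicit Arguments.
Unset Strict Implicit.
Unset Printing Implicit Defensive.
Import GRing.Theory Num.Theory.
Local Open Scope ring_scope.

Definition C : numClosedFieldType := (Rdefinitions.R)[i].

(* Ambient type of pairs (v, M); points of V = C^d (+) so(d,C) are those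
   with M skew-symmetric. *)
Definition Vpt (d : nat) : Type := ('cV[C]_d * 'M[C]_d)%type.
Definition inV d (x : Vpt d) : Prop := x.2^T = - x.2.

(* 1-based coordinates c_i and c_{ij} (0 when the index is out of range). *)
Definition cv d (x : Vpt d) (i : nat) : C :=
  match @insub nat (fun k => k < d)%N _ i.-1 with
  | Some i' => x.1 i' 0 | None => 0 end.
Definition cM d (x : Vpt d) (i j : nat) : C :=
  match @insub nat (fun k => k < d)%N _ i.-1,
        @insub nat (fun k => k < d)%N _ j.-1 with
  | Some i', Some j' => x.2 i' j' | _, _ => 0 end.

Definition orth d (A : 'M[C]_d) : Prop := A *m A^T = 1%:M.
Definition act d (A : 'M[C]_d) (x : Vpt d) : Vpt d := (A *m x.1, A *m x.2 *m A^T).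

Definition inW d (A : 'M[C]_d) : Prop :=
  (forall i j : 'I_d, i != j -> A i j = 0) /\ (forall i : 'I_d, A i i = 1 \/ A i i = -1).

Inductive polyfun d : (Vpt d -> C) -> Prop :=
| pf_const (a : C) : polyfun (fun _ => a)
| pf_v (i : 'I_d) : polyfun (fun x => x.1 i 0)
| pf_M (i j : 'I_d) : (i < j)%N -> polyfun (fun x => x.2 i j)
| pf_add f g : polyfun f -> polyfun g -> polyfun (fun x => f x + g x)
| pf_mul f g : polyfun f -> polyfun g -> polyfun (fun x => f x * g x).

(* A rational function on V is represented by a fraction p/q of polynomial
   functions with q not identically zero on V. *)
Definition ratrep d (p q : Vpt d -> C) : Prop :=
  polyfun p /\ polyfun q /\ exists x, inV x /\ q x != 0.

Definition rateq d (p q p' q' : Vpt d -> C) : Prop :=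
  forall x, inV x -> p x * q' x = p' x * q x.

Definition rat_val d (p q : Vpt d -> C) (x : Vpt d) (y : C) : Prop :=
  exists p' q', ratrep p' q' /\ rateq p q p' q' /\ q' x != 0 /\ y = p' x / q' x.
Definition in_dom d (p q : Vpt d -> C) (x : Vpt d) : Prop := exists y, rat_val p q x y.

Definition rat_invariant d (p q : Vpt d -> C) : Prop :=
  forall A, orth A -> forall x, inV x -> p (act A x) * q x = p x * q (act A x).

Definition zariski_open d (U : Vpt d -> Prop) : Prop :=
  exists F : (Vpt d -> C) -> Prop, (forall h, F h -> polyfun h) /\
    forall x, inV x -> (U x <-> exists h, F h /\ h x != 0).

Definition O_invariant d (U : Vpt d -> Prop) : Prop :=
  forall A x, orth A -> inV x -> U x -> U (act A x).

(* S (a subset of V) is a relative N-section w.r.t. the open set U: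
   S meets every orbit contained in U, and N = {A in O_d : A S = S}. *)
Definition relative_section d (U S : Vpt d -> Prop) (N : 'M[C]_d -> Prop) : Prop :=
  (forall x, inV x -> (forall A, orth A -> U (act A x)) ->
     exists A, orth A /\ S (act A x)) /\
  (forall A, orth A ->
     ((forall x, inV x -> S x -> S (act A x)) /\
      (forall y, inV y -> S y -> exists x, inV x /\ S x /\ act A x = y))
     <-> N A).

Fixpoint Lsp d (i : nat) (x : Vpt d) : Prop :=
  match i with
  | 0 => True
  | 1 => forall j, (1 <= j <= d - 1)%N -> cv x j = 0
  | i'.+1 => Lsp i' x /\ forall k, (1 <= k <= d - i)%N -> cM x k (d - i + 2) = 0
  end.

(* Main.v *)
Require Import Defs.
From mathcomp Require Import all_boot all_algebra.
From mathcomp Require Import complex Rstruct zify ring.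
From Stdlib Require Import FunctionalExtensionality ClassicalEpsilon.
Import GRing.Theory Num.Theory.
Local Open Scope ring_scope.
Set Implicit Arguments. Unset Strict Implicit. Unset Printing Implicit Defensive.

Section Main.
Variable d : nat.
Implicit Types (x : Vpt d) (A B : 'M[C]_d).

Lemma pf_ext (f g : Vpt d -> C) : (forall x, f x = g x) -> polyfun f -> polyfun g.
Proof. by move=> e; have -> : g = f by apply: functional_extensionality => x; rewrite e. Qed.

Lemma pf_opp f : polyfun f -> @polyfun d (fun x => - f x).
Proof. move=> h; apply: (pf_ext (f := fun x => (-1) * f x)); first by move=> x; rewrite mulN1r.
by apply: pf_mul => //; apply: pf_const. Qed.

Lemma pf_sub f g : polyfun f -> polyfun g -> @polyfun d (fun x => f x - g x).
Proof. by move=> hf hg; apply: pf_add => //; apply: pf_opp. Qed.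

Lemma pf_sum (I : Type) (r : seq I) (P : pred I) (F : I -> Vpt d -> C) :
  (forall i, P i -> polyfun (F i)) -> polyfun (fun x => \sum_(i <- r | P i) F i x).
Proof.
move=> hF; elim: r => [|i r IH].
  by apply: (pf_ext (f := fun _ => 0)) => [x|]; [rewrite big_nil|apply: pf_const].
case Pi: (P i).
  by apply: (pf_ext (f := fun x => F i x + \sum_(j <- r | P j) F j x)) => [x|];
    [rewrite big_cons Pi | apply: pf_add => //; apply: hF].
by move: IH; apply: pf_ext => x; rewrite big_cons Pi.
Qed.

Lemma pf_prod (I : Type) (r : seq I) (P : pred I) (F : I -> Vpt d -> C) :
  (forall i, P i -> polyfun (F i)) -> polyfun (fun x => \prod_(i <- r | P i) F i x).
Proof.
move=> hF; elim: r => [|i r IH].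
  by apply: (pf_ext (f := fun _ => 1)) => [x|]; [rewrite big_nil|apply: pf_const].
case Pi: (P i).
  by apply: (pf_ext (f := fun x => F i x * \prod_(j <- r | P j) F j x)) => [x|];
    [rewrite big_cons Pi | apply: pf_mul => //; apply: hF].
by move: IH; apply: pf_ext => x; rewrite big_cons Pi.
Qed.

Lemma pf_exp f n : polyfun f -> @polyfun d (fun x => f x ^+ n).
Proof.
move=> hf; elim: n => [|n IH].
  by apply: (pf_ext (f := fun _ => 1)) => [x|]; [rewrite expr0|apply: pf_const].
by apply: (pf_ext (f := fun x => f x * f x ^+ n)) => [x|]; [rewrite exprS|apply: pf_mul].
Qed.

Definition pmx m n (F : Vpt d -> 'M[C]_(m, n)) := forall i j, polyfun (fun x => F x i j).

Lemma pmx_const m n (B : 'M[C]_(m, n)) : pmx (fun _ => B).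
Proof. by move=> i j; apply: pf_const. Qed.

Lemma pmx_mul m n p (F : Vpt d -> 'M[C]_(m, n)) (G : Vpt d -> 'M[C]_(n, p)) :
  pmx F -> pmx G -> pmx (fun x => F x *m G x).
Proof.
move=> hF hG i j; apply: (pf_ext (f := fun x => \sum_k F x i k * G x k j)).
  by move=> x; rewrite mxE.
by apply: pf_sum => k _; apply: pf_mul.
Qed.

Lemma pmx_add m n (F G : Vpt d -> 'M[C]_(m, n)) : pmx F -> pmx G -> pmx (fun x => F x + G x).
Proof. by move=> hF hG i j; apply: (pf_ext (f := fun x => F x i j + G x i j)) => [x|];
  [rewrite mxE | apply: pf_add]. Qed.

Lemma pmx_scale m n (f : Vpt d -> C) (F : Vpt d -> 'M[C]_(m, n)) :
  polyfun f -> pmx F -> pmx (fun x => f x *: F x).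
Proof. by move=> hf hF i j; apply: (pf_ext (f := fun x => f x * F x i j)) => [x|];
  [rewrite mxE | apply: pf_mul]. Qed.

Lemma pmx_tr m n (F : Vpt d -> 'M[C]_(m, n)) : pmx F -> pmx (fun x => (F x)^T).
Proof. by move=> hF i j; apply: (pf_ext (f := fun x => F x j i)) => [x|]; [rewrite mxE|]. Qed.

Lemma pmx_v : pmx (fun x : Vpt d => x.1).
Proof. by move=> i j; rewrite (ord1 j); apply: pf_v. Qed.

Definition skw (M : 'M[C]_d) : 'M[C]_d :=
  \matrix_(i, j) (if (i < j)%N then M i j else if (j < i)%N then - M j i else 0).
Definition sk x : Vpt d := (x.1, skw x.2).

Lemma pmx_skw : pmx (fun x : Vpt d => skw x.2).
Proof.
move=> i j; apply: (pf_ext (f := fun x => if (i < j)%N then x.2 i j else if (j < i)%N then - x.2 j i else 0)).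
  by move=> x; rewrite mxE.
case: ltnP => ij; first exact: pf_M.
case: ltnP => ji; last exact: pf_const.
by apply: pf_opp; apply: pf_M.
Qed.

Lemma pf_comp (f : Vpt d -> C) (phi : Vpt d -> Vpt d) :
  polyfun f -> pmx (fun x => (phi x).1) -> pmx (fun x => (phi x).2) ->
  polyfun (fun x => f (phi x)).
Proof.
move=> hf h1 h2; elim: hf => [a|i|i j _|f1 g1 _ IH1 _ IH2|f1 g1 _ IH1 _ IH2].
- exact: pf_const.
- exact: h1.
- exact: h2.
- exact: pf_add.
- exact: pf_mul.
Qed.

Lemma skw_id x : inV x -> skw x.2 = x.2.
Proof.
rewrite /inV => hV; apply/matrixP => i j; rewrite mxE.
have hT : forall a b, x.2 b a = - x.2 a b.
  by move=> a b; have := congr1 (fun M : 'M[C]_d => M a b) hV; rewrite !mxE.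
case: ltnP => ij //; case: ltnP => ji; first by rewrite hT opprK.
have -> : i = j by apply: val_inj; apply/eqP; rewrite eqn_leq ij ji.
have := hT j j; move/eqP; rewrite -addr_eq0 -mulr2n mulrn_eq0 /= => /eqP ->.
by [].
Qed.

Lemma sk_id x : inV x -> sk x = x.
Proof. by move=> h; rewrite /sk skw_id //; case: x {h}. Qed.


Definition line (a b : Vpt d) (t : C) : Vpt d :=
  (a.1 + t *: (b.1 - a.1), a.2 + t *: (b.2 - a.2)).
Definition polyline (f : Vpt d -> C) :=
  forall a b, exists P : {poly C}, forall t, f (line a b t) = P.[t].

Lemma pf_line f : polyfun f -> polyline f.
Proof.
elim=> [c|i|i j _|f1 g1 _ IHf _ IHg|f1 g1 _ IHf _ IHg] a b.
- by exists c%:P => t; rewrite hornerC.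
- exists ((a.1 i 0)%:P + 'X * (b.1 i 0 - a.1 i 0)%:P) => t.
  by rewrite /line /= !mxE hornerD hornerC hornerM hornerX hornerC.
- exists ((a.2 i j)%:P + 'X * (b.2 i j - a.2 i j)%:P) => t.
  by rewrite /line /= !mxE hornerD hornerC hornerM hornerX hornerC.
- have [P hP] := IHf a b; have [Q hQ] := IHg a b.
  by exists (P + Q) => t; rewrite hornerD hP hQ.
- have [P hP] := IHf a b; have [Q hQ] := IHg a b.
  by exists (P * Q) => t; rewrite hornerM hP hQ.
Qed.

Lemma poly_all0 (P : {poly C}) : (forall t, P.[t] = 0) -> P = 0.
Proof.
move=> h; apply: (@roots_geq_poly_eq0 _ _ [seq i%:R | i <- iota 0 (size P)]).
- by apply/allP => t _; rewrite /root h.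
- rewrite map_inj_uniq ?iota_uniq // => m n /eqP; rewrite eqr_nat => /eqP //.
- by rewrite size_map size_iota.
Qed.

Lemma line0 a b : line a b 0 = a.
Proof. by rewrite /line !scale0r !addr0; case: a. Qed.
Lemma line1 a b : line a b 1 = b.
Proof. by rewrite /line !scale1r ![a.1 + _]addrC ![a.2 + _]addrC !subrK; case: b. Qed.

Lemma dense (S : Vpt d -> Prop) g h :
  (forall a b t, S a -> S b -> S (line a b t)) -> polyline g -> polyline h ->
  (forall x, S x -> h x != 0 -> g x = 0) ->
  forall x0, S x0 -> h x0 != 0 -> forall x, S x -> g x = 0.
Proof.
move=> Sl pg ph hgh x0 S0 h0 x Sx.
have [G hG] := pg x0 x; have [H hH] := ph x0 x.
have HG0 : H * G = 0.
  apply: poly_all0 => t; rewrite hornerM -hG -hH.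
  case: (eqVneq (h (line x0 x t)) 0) => [->|hn]; first by rewrite mul0r.
  by rewrite hgh ?mulr0 //; apply: Sl.
have Hn0 : H != 0.
  apply: contraNneq h0 => H0; have := hH 0; rewrite line0 => ->.
  by rewrite H0 horner0.
move/eqP: HG0; rewrite mulf_eq0 (negbTE Hn0) /= => /eqP G0.
by have := hG 1; rewrite line1 => ->; rewrite G0 horner0.
Qed.

Lemma inV_entry x : inV x -> forall i j, x.2 j i = - x.2 i j.
Proof. by move=> hV i j; have := congr1 (fun M : 'M[C]_d => M i j) hV; rewrite !mxE. Qed.

Lemma inV_entryP x : (forall i j, x.2 j i = - x.2 i j) -> inV x.
Proof. by move=> h; apply/matrixP => i j; rewrite !mxE h. Qed.

Lemma inV_line a b t : inV a -> inV b -> inV (line a b t).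
Proof.
move=> ha hb; apply: inV_entryP => i j; rewrite /line /= !mxE.
rewrite (inV_entry ha) (inV_entry hb); ring.
Qed.

Definition dot (a b : 'cV[C]_d) : C := \sum_i a i 0 * b i 0.

Record st := St { sa : 'cV[C]_d; sta : C; sNa : C; sb : 'cV[C]_d; stb : C }.

Definition step (M : 'M[C]_d) (s : st) : st :=
  St (sb s) (stb s) (dot (sb s) (sb s))
     ((stb s * sNa s) *: (M *m sb s) + (sta s * dot (sb s) (sb s)) *: sa s)
     (stb s ^+ 2 * sNa s).
Definition st0 (v : 'cV[C]_d) := St 0 1 1 v 1.
Definition stt x n := iter n (step x.2) (st0 x.1).

Definition P k x := let s := stt (sk x) k.-1 in dot (sb s) (sb s) * sta s ^+ 2.
Definition Q k x := let s := stt (sk x) k.-1 in stb s ^+ 2 * sNa s.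

Lemma pf_dot (F G : Vpt d -> 'cV[C]_d) : pmx F -> pmx G -> polyfun (fun x => dot (F x) (G x)).
Proof. by move=> hF hG; apply: pf_sum => i _; apply: pf_mul. Qed.

Lemma pst n :
  pmx (fun x => sa (stt (sk x) n)) /\ polyfun (fun x => sta (stt (sk x) n)) /\
  polyfun (fun x => sNa (stt (sk x) n)) /\ pmx (fun x => sb (stt (sk x) n)) /\
  polyfun (fun x => stb (stt (sk x) n)).
Proof.
elim: n => [|n [ha [hta [hNa [hb htb]]]]].
  split; first exact: pmx_const.
  split; first exact: pf_const. split; first exact: pf_const.
  by split; [exact: pmx_v | exact: pf_const].
rewrite /stt /=.
split; first exact: hb. split; first exact: htb. split; first exact: pf_dot.
split; last by apply: pf_mul; [apply: pf_exp|].
apply: pmx_add; apply: pmx_scale.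
- exact: pf_mul.
- by apply: pmx_mul => //; apply: pmx_skw.
- by apply: pf_mul => //; apply: pf_dot.
- exact: ha.
Qed.

Lemma pf_P k : polyfun (P k).
Proof. have [_ [hta [_ [hb _]]]] := pst k.-1.
by apply: pf_mul; [apply: pf_dot | apply: pf_exp]. Qed.
Lemma pf_Q k : polyfun (Q k).
Proof. have [_ [_ [hNa [_ htb]]]] := pst k.-1.
by apply: pf_mul; [apply: pf_exp|]. Qed.

Lemma dotE (a b : 'cV[C]_d) : dot a b = (a^T *m b) 0 0.
Proof. by rewrite mxE; apply: eq_bigr => i _; rewrite mxE. Qed.

Lemma dot_mul A (a b : 'cV[C]_d) : A^T *m A = 1%:M -> dot (A *m a) (A *m b) = dot a b.
Proof. by move=> h; rewrite !dotE trmx_mul -mulmxA (mulmxA A^T) h mul1mx. Qed.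

Definition mst A s := St (A *m sa s) (sta s) (sNa s) (A *m sb s) (stb s).

Lemma stt_act A M v n : A^T *m A = 1%:M ->
  iter n (step (A *m M *m A^T)) (st0 (A *m v)) = mst A (iter n (step M) (st0 v)).
Proof.
move=> h; elim: n => [|n IH]; first by rewrite /= /mst /st0 /= mulmx0.
rewrite iterS IH iterS /step /mst /= !dot_mul //.
congr St; rewrite mulmxDr -!scalemxAr; congr (_ + _).
by rewrite -!mulmxA (mulmxA A^T) h mul1mx.
Qed.

Lemma orthT A : orth A -> A^T *m A = 1%:M.
Proof. by move=> h; apply: mulmx1C. Qed.

Lemma inV_act A x : inV x -> inV (act A x).
Proof. by rewrite /inV /act /= => h; rewrite !trmx_mul trmxK h mulNmx mulmxN mulmxA. Qed.

Lemma PQ_act A x k : orth A -> inV x -> P k (act A x) = P k x /\ Q k (act A x) = Q k x.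
Proof.
move=> hA hx; rewrite /P /Q !sk_id //; last exact: inV_act.
by rewrite /stt /act /= stt_act ?orthT //= dot_mul ?orthT.
Qed.


Lemma cvE x (j : 'I_d) : cv x j.+1 = x.1 j 0.
Proof. by rewrite /cv /= valK. Qed.
Lemma cME x (r c : 'I_d) : cM x r.+1 c.+1 = x.2 r c.
Proof. by rewrite /cM /= !valK. Qed.

Definition ev (k : nat) : 'cV[C]_d := \col_(i < d) ((i == k :> nat)%:R).

Lemma ev_out k : (d <= k)%N -> ev k = 0.
Proof.
move=> h; apply/matrixP => i j; rewrite !mxE.
rewrite (_ : (i == k :> nat) = false) //; apply/negbTE; by rewrite neq_ltn (leq_trans (ltn_ord i) h).
Qed.

Lemma sum_delta (F : 'I_d -> C) (c : 'I_d) : \sum_j F j * (j == c :> nat)%:R = F c.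
Proof.
rewrite (bigD1 c) //= eqxx mulr1 big1 ?addr0 // => j hj.
by rewrite (_ : (j == c :> nat) = false) ?mulr0 //; apply/negbTE.
Qed.

Lemma dot_ev (c : 'I_d) : dot (ev c) (ev c) = 1.
Proof.
rewrite /dot (eq_bigr (fun i => ev c i 0 * (i == c :> nat)%:R)) => [|i _].
  by rewrite sum_delta mxE eqxx.
by rewrite [X in _ * X]mxE.
Qed.

Lemma dotZ a b (u v : 'cV[C]_d) : dot (a *: u) (b *: v) = a * b * dot u v.
Proof. rewrite /dot mulr_sumr; apply: eq_bigr => i _; rewrite !mxE; ring. Qed.

Lemma mul_ev (M : 'M[C]_d) (c : 'I_d) r : (M *m ev c) r 0 = M r c.
Proof. by rewrite mxE -[RHS](sum_delta (fun j => M r j)); apply: eq_bigr => j _; rewrite mxE. Qed.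

Definition am x j := if j == 0%N then cv x d else cM x (d - j) (d - j).+1.
Definition sig x m := \prod_(j < m) am x j.
Lemma sigS x m : sig x m.+1 = sig x m * am x m.
Proof. by rewrite /sig big_ord_recr. Qed.

Definition Lc i x := (forall j : 'I_d, (j.+1 < d)%N -> x.1 j 0 = 0) /\
  (forall r c : 'I_d, (d - i < c)%N -> (r.+1 < c)%N -> x.2 r c = 0).

Definition Inv x j s := sa s = (sig x j * sta s) *: ev (d - j) /\
  sNa s = (sig x j * sta s) ^+ 2 /\ sb s = (sig x j.+1 * stb s) *: ev (d - j.+1).

Definition up x (c : 'I_d) : 'cV[C]_d := \col_(r < d) (if (r < c)%N then x.2 r c else 0).


Lemma diag0 x i : inV x -> x.2 i i = 0.
Proof.
move=> hx; have := inV_entry hx i i; move/eqP; rewrite -addr_eq0 -mulr2n mulrn_eq0 /=.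
by move/eqP.
Qed.

Lemma colL x (c : 'I_d) : inV x ->
  (forall r c' : 'I_d, (c < c')%N -> (r.+1 < c')%N -> x.2 r c' = 0) ->
  x.2 *m ev c = up x c - cM x c.+1 c.+2 *: ev c.+1.
Proof.
move=> hx hc; apply/matrixP => r z; rewrite (ord1 z) mul_ev !mxE.
case: (ltngtP r c) => hrc.
- rewrite (_ : (r == c.+1 :> nat) = false) ?mulr0 ?subr0 //.
  by apply/negbTE/eqP; lia.
-   case: (eqVneq (r : nat) c.+1) => hr.
    rewrite (inV_entry hx c r) (_ : c.+2 = r.+1); last by rewrite hr.
    by rewrite cME mulr1 sub0r.
  rewrite (inV_entry hx c r) hc //; last by lia.
  by rewrite mulr0 subr0 oppr0.
- have -> : r = c by apply: val_inj.
  by rewrite diag0 // ?ltnn (_ : (c == c.+1 :> nat) = false) ?mulr0 ?subr0 //; apply/negbTE/eqP; lia.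
Qed.

Lemma stepL x j s w : Inv x j s -> (j.+1 < d)%N ->
  x.2 *m ev (d - j.+1) = w - am x j *: ev (d - j) ->
  step x.2 s = St ((sig x j.+1 * stb s) *: ev (d - j.+1)) (stb s) ((sig x j.+1 * stb s) ^+ 2)
     ((stb s * (sig x j * sta s) ^+ 2 * (sig x j.+1 * stb s)) *: w)
     (stb s ^+ 2 * (sig x j * sta s) ^+ 2).
Proof.
case: s => a ta Na b tb [/= ha [hNa hb]] hj hM.
have hdj : (d - j.+1 < d)%N by lia.
rewrite /step /= hb hNa ha dotZ (dot_ev (Ordinal hdj)) mulr1.
congr St.
rewrite -scalemxAr hM !scalerA scalerBr scalerA.
rewrite [X in _ - X *: _ + _](_ : _ = ta * (sig x j.+1 * tb * (sig x j.+1 * tb)) * (sig x j * ta)).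
  by rewrite subrK.
rewrite sigS; ring.
Qed.


Lemma am_ev x j : am x j *: ev (d - j) = cM x (d - j) (d - j).+1 *: ev (d - j).
Proof. by rewrite /am; case: eqP => [->|] //; rewrite subn0 ev_out ?scaler0. Qed.

Lemma chain x i : inV x -> Lc i x -> forall j, (j < i)%N -> (j.+1 < d)%N -> Inv x j (stt x j).
Proof.
move=> hx [hv hM]; elim=> [|j IH] hji hjd.
  rewrite /stt /= /Inv /=; split; first by rewrite subn0 ev_out ?scaler0.
  split; first by rewrite /sig big_ord0 mul1r expr1n.
  have hd0 : (d.-1 < d)%N by lia.
  have hcv : cv x d = x.1 (Ordinal hd0) 0 by have := cvE x (Ordinal hd0); rewrite /= prednK //; lia.
  rewrite /sig big_ord1 /am /= hcv mulr1.
  apply/matrixP => r z; rewrite (ord1 z) !mxE.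
  case: (eqVneq (r : nat) (d - 1)%N) => hr.
    have -> : r = Ordinal hd0 by apply: val_inj => /=; rewrite hr subn1.
    by rewrite mulr1.
  by rewrite mulr0 hv //; move: hr (ltn_ord r); lia.
have I := IH (ltnW hji) (ltnW hjd).
have hc : (d - j.+1 < d)%N by lia.
have hcol := @colL x (Ordinal hc) hx.
have hcol2 : x.2 *m ev (d - j.+1) = am x j.+1 *: ev (d - j.+2) - am x j *: ev (d - j).
  rewrite am_ev; move: hcol => /= ->; last first.
    by move=> r c' hc' hr; apply: hM => //; lia.
  have e : (d - j.+1).+1 = (d - j)%N by lia.
  rewrite !e; congr (_ - _).
  apply/matrixP => r z; rewrite (ord1 z) !mxE.
  case: ltnP => hrc.
    case: (eqVneq (r : nat) (d - j.+2)%N) => hr.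
      rewrite mulr1 /am /= (_ : (d - j.+1).+1 = (Ordinal hc).+1) //.
      have e2 : (d - j.+2).+1 = (d - j.+1)%N by lia.
      by rewrite -(cME x r (Ordinal hc)) hr e2.
    by rewrite mulr0 hM //=; move: hrc hr => /=; lia.
  rewrite (_ : (r == (d - j.+2)%N :> nat) = false) ?mulr0 //.
  by apply/negbTE/eqP; move: hrc => /=; lia.
rewrite /stt iterS -/(stt x j) (stepL I (ltnW hjd) hcol2) /Inv /=.
split=> //; split=> //.
by rewrite scalerA; congr (_ *: _); rewrite !sigS; ring.
Qed.


Lemma colfree x i (hc : (d - i.+1 < d)%N) : (i.+1 < d)%N -> inV x -> Lc i.+1 x ->
  x.2 *m ev (d - i.+1) = up x (Ordinal hc) - am x i *: ev (d - i).
Proof.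
move=> hid hx [hv hM]; rewrite am_ev; move: (@colL x (Ordinal hc) hx) => /= ->.
  have e : (d - i.+1).+1 = (d - i)%N by lia.
  by rewrite !e.
by move=> r c' /= hc' hr; apply: hM.
Qed.

Lemma formula x i (hc : (d - i.+1 < d)%N) : inV x -> Lc i.+1 x -> (i.+2 <= d)%N ->
  P i.+2 x = Q i.+2 x * dot (up x (Ordinal hc)) (up x (Ordinal hc)).
Proof.
move=> hx hL hid; rewrite /P /Q sk_id // /stt iterS -/(stt x i).
have I := chain hx hL (ltnSn i) hid.
rewrite (stepL I hid (colfree hc hid hx hL)) /= dotZ; ring.
Qed.

Lemma sig_nz x m : (forall j, (j < m)%N -> am x j != 0) -> sig x m != 0.
Proof.
elim: m => [|m IH] h; first by rewrite /sig big_ord0 oner_neq0.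
by rewrite sigS mulf_neq0 ?IH // => [j hj|]; apply: h; lia.
Qed.

Lemma Q_nz x i : inV x -> Lc i.+1 x -> (i.+2 <= d)%N ->
  (forall j, (j < d)%N -> am x j != 0) -> Q i.+2 x != 0.
Proof.
move=> hx hL hid ham.
have nzc : forall j, (j <= i)%N -> sta (stt x j) != 0 /\ stb (stt x j) != 0.
  elim=> [|j IH] hj; first by rewrite /= oner_neq0.
  have [h1 h2] := IH (ltnW hj).
  have hj1 : (j < i.+1)%N by lia.
  have hj2 : (j.+1 < d)%N by lia.
  have [_ [hN _]] := chain hx hL hj1 hj2.
  rewrite /stt iterS -/(stt x j) /=; split=> //.
  rewrite hN mulf_neq0 ?expf_neq0 ?mulf_neq0 //; apply: sig_nz => k hk; apply: ham; lia.
have [h1 h2] := nzc i (leqnn i).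
have I := chain hx hL (ltnSn i) hid.
have hc : (d - i.+1 < d)%N by lia.
rewrite /Q sk_id // /stt iterS -/(stt x i) (stepL I hid (colfree hc hid hx hL)) /=.
by rewrite !mulf_neq0 ?expf_neq0 ?mulf_neq0 //; apply: sig_nz => k hk; apply: ham; lia.
Qed.


Lemma Lsp_Lc i x : (1 <= i)%N -> (i < d)%N -> Lsp i x <-> Lc i x.
Proof.
elim: i => [//|i IH] h1 hid.
case: i IH h1 hid => [|i] IH _ hid.
  change (Lsp 1 x) with (forall j, (1 <= j <= d - 1)%N -> cv x j = 0).
  split.
    move=> h; split => [j hj|r c hc]; last by have := ltn_ord c; lia.
    by rewrite -cvE h //; lia.
  move=> [hv _] j hj; have hj' : (j.-1 < d)%N by lia.
  have := cvE x (Ordinal hj'); rewrite /= prednK; last by lia.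
  by move=> ->; apply: hv => /=; lia.
have e : Lsp i.+2 x = (Lsp i.+1 x /\ forall k, (1 <= k <= d - i.+2)%N -> cM x k (d - i.+2 + 2) = 0) by [].
rewrite e (IH _ (ltnW hid)) //.
have hc : (d - i.+1 < d)%N by lia.
have e2 : (d - i.+2 + 2)%N = (Ordinal hc).+1 by rewrite /=; lia.
split.
  move=> [[hv hM] hk]; split => // r c hc' hr.
  case: (ltngtP (d - i.+1)%N c) => hc2.
  - by apply: hM => //; lia.
  - by move: hc' hc2; lia.
  - have -> : c = Ordinal hc by apply: val_inj.
    by have := hk r.+1; rewrite e2 cME; apply; move: hr; rewrite -hc2 /=; lia.
move=> [hv hM]; split; first by split=> // r c hc' hr; apply: hM => //; lia.
move=> k hk; rewrite e2; have hk' : (k.-1 < d)%N by lia.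
have := cME x (Ordinal hk') (Ordinal hc); rewrite /= prednK; last by lia.
by move=> ->; apply: hM => /=; lia.
Qed.


Lemma dotC (a b : 'cV[C]_d) : dot a b = dot b a.
Proof. by apply: eq_bigr => i _; rewrite mulrC. Qed.
Lemma dotBl (a b c : 'cV[C]_d) : dot (a - b) c = dot a c - dot b c.
Proof. by rewrite /dot -sumrB; apply: eq_bigr => i _; rewrite !mxE mulrBl. Qed.
Lemma dotZl k (a b : 'cV[C]_d) : dot (k *: a) b = k * dot a b.
Proof. by rewrite /dot mulr_sumr; apply: eq_bigr => i _; rewrite !mxE mulrA. Qed.

Lemma trmul (a b : 'cV[C]_d) : a^T *m b = (dot a b)%:M.
Proof. by apply/matrixP => i j; rewrite (ord1 i) (ord1 j) dotE !mxE /= mulr1n. Qed.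

Lemma householder (n : nat) (u : 'cV[C]_d) : (0 < n)%N -> (n <= d)%N ->
  (forall k : 'I_d, (n <= k)%N -> u k 0 = 0) -> dot u u != 0 ->
  exists H lam, H^T = H /\ H *m H^T = 1%:M /\ H *m u = lam *: ev n.-1 /\
    (forall r k : 'I_d, (n <= k)%N -> H r k = (r == k)%:R).
Proof.
move=> hn0 hnd hu huu.
have hn1 : (n.-1 < d)%N by lia.
set s := sqrtC (dot u u); set un := dot u (ev n.-1).
pose lam := if s == un then - s else s.
have hl2 : lam ^+ 2 = dot u u by rewrite /lam; case: ifP => _; rewrite ?sqrrN sqrtCK.
have hl0 : lam != 0 by apply/eqP => h; move: huu; rewrite -hl2 h expr0n eqxx.
have hlu : lam != un.
  rewrite /lam; case: (eqVneq s un) => [hs|hs] //.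
  apply/eqP => h.
  have e : s *+ 2 = 0 by rewrite mulr2n {1}hs -h addNr.
  move/eqP: e; rewrite mulrn_eq0 /= => /eqP s0.
  by move: huu; rewrite -(sqrtCK (dot u u)) -/s s0 expr0n eqxx.
pose w := u - lam *: ev n.-1.
have hen : dot (ev n.-1) (ev n.-1) = 1 by apply: (dot_ev (Ordinal hn1)).
have hwu : dot w u = lam * (lam - un).
  by rewrite dotBl dotZl (dotC _ u) -hl2 -/un; ring.
have hww : dot w w = 2 * (lam * (lam - un)).
  rewrite {1}/w dotBl dotZl (dotC u w) hwu (dotC _ w) /w dotBl dotZl hen -/un; ring.
have hww0 : dot w w != 0.
  by rewrite hww !mulf_neq0 ?pnatr_eq0 ?subr_eq0.
pose g := 2 / dot w w.
have hg : g * dot w w = 2 by rewrite /g mulfVK.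
pose H := 1%:M - g *: (w *m w^T).
have HT : H^T = H by rewrite /H linearB /= trmx1 linearZ /= trmx_mul trmxK.
exists H, lam; split=> //; split.
  rewrite HT /H mulmxBl mul1mx mulmxBr mulmx1 -!scalemxAl -!scalemxAr.
  rewrite !mulmxA -(mulmxA w) trmul mul_mx_scalar -!scalemxAl scalerA.
  by rewrite hg scaler_nat mulr2n scalerDr opprB addrK subrK.
split.
  rewrite /H mulmxBl mul1mx -scalemxAl -mulmxA trmul mul_mx_scalar scalerA.
  have -> : g * dot w u = 1.
    by rewrite /g hwu hww; field; rewrite subr_eq0 hlu hl0.
  by rewrite scale1r /w opprB addrC subrK.
move=> r k hk; rewrite /H !mxE big_ord1 !mxE.
have -> : (k == n.-1 :> nat) = false by apply/negbTE/eqP; lia.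
by rewrite (hu k hk) mulr0 subr0 mulr0 mulr0 subr0.
Qed.


Lemma sum_delta_o (F : 'I_d -> C) (c : 'I_d) : \sum_j F j * (j == c)%:R = F c.
Proof.
rewrite (bigD1 c) //= eqxx mulr1 big1 ?addr0 // => j hj.
by rewrite (negbTE hj) mulr0.
Qed.

Lemma Hfix (H : 'M[C]_d) n (v : 'cV[C]_d) :
  (forall r k : 'I_d, (n <= k)%N -> H r k = (r == k)%:R) ->
  (forall k : 'I_d, (k < n)%N -> v k 0 = 0) -> H *m v = v.
Proof.
move=> hH hv; apply/matrixP => r z; rewrite (ord1 z).
rewrite -{2}(mul1mx v) !mxE; apply: eq_bigr => k _.
case: (ltnP k n) => hk; first by rewrite hv // !mulr0.
by rewrite hH // mxE.
Qed.

Lemma act_mul A B x : act (A *m B) x = act A (act B x).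
Proof. by rewrite /act /= trmx_mul !mulmxA. Qed.

Lemma orth_mul A B : orth A -> orth B -> orth (A *m B).
Proof.
rewrite /orth => hA hB; rewrite trmx_mul mulmxA -(mulmxA A) hB mulmx1 hA //.
Qed.

Lemma Lbase x : (0 < d)%N -> inV x -> dot x.1 x.1 != 0 -> exists H, orth H /\ Lc 1 (act H x).
Proof.
move=> hd0 hx hn.
have hk : forall k : 'I_d, (d <= k)%N -> x.1 k 0 = 0 by move=> k; rewrite leqNgt ltn_ord.
have [H [lam [HT [HH [Hu Hd]]]]] := householder hd0 (leqnn d) hk hn.
exists H; split=> //; split.
  move=> j hj; rewrite /act /= Hu !mxE.
  by rewrite (_ : (j == d.-1 :> nat) = false) ?mulr0 //; apply/negbTE/eqP; lia.
by move=> r c hc; have := ltn_ord c; lia.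
Qed.


Lemma Lstep x i (hc : (d - i < d)%N) : inV x -> Lc i x -> (1 <= i)%N -> (i.+1 < d)%N ->
  dot (up x (Ordinal hc)) (up x (Ordinal hc)) != 0 ->
  exists H, orth H /\ Lc i.+1 (act H x).
Proof.
move=> hx [hv hM] hi1 hid hn.
set c := Ordinal hc.
have cE : (c : nat) = (d - i)%N by [].
have hc0 : (0 < c)%N by rewrite /=; lia.
have hk : forall k : 'I_d, (c <= k)%N -> (up x c) k 0 = 0.
  by move=> k hk; rewrite mxE ltnNge hk.
have [H [lam [HT [HH [Hu Hd]]]]] := householder hc0 (ltnW hc) hk hn.
exists H; split=> //; split.
  move=> j hj; rewrite /act /= (@Hfix H c) //; first by apply: hv.
  by move=> k hkc; apply: hv; rewrite /= in hkc; lia.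
move=> r c' hc' hr; rewrite /act /=.
have hcc : (c <= c')%N by rewrite /=; lia.
rewrite mxE (eq_bigr (fun l => (H *m x.2) r l * (l == c')%:R)); last first.
  by move=> l _; rewrite HT Hd // eq_sym.
rewrite sum_delta_o mxE.
case: (ltngtP c c') => hcc'.
- apply: big1 => k _.
  case: (ltnP k.+1 c') => hk1; first by rewrite hM ?mulr0 //; lia.
  rewrite Hd; last by lia.
  by rewrite (_ : (r == k) = false) ?mul0r //; apply/negbTE/eqP => e; move: hr hk1; rewrite e; lia.
- by move: hcc hcc'; lia.
- have -> : c' = c by apply: val_inj.
  rewrite (eq_bigr (fun k => H r k * (up x c) k 0)); last first.
    move=> k _; rewrite mxE; case: ltnP => hkc //.
    rewrite Hd // (_ : (r == k) = false) ?mul0r //; apply/negbTE/eqP => e.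
    by move: hr hkc; rewrite e -hcc' /=; lia.
  have := congr1 (fun M : 'cV[C]_d => M r 0) Hu; rewrite !mxE => ->.
  by rewrite (_ : (r == c.-1 :> nat) = false) ?mulr0 //; apply/negbTE/eqP; move: hr; rewrite -hcc' /=; lia.
Qed.


Lemma line_Lc i a b t : Lc i a -> Lc i b -> Lc i (line a b t).
Proof.
move=> [va Ma] [vb Mb]; split=> [j hj|r c hc hr]; rewrite /line /= !mxE.
  by rewrite va ?vb // subrr mulr0 addr0.
by rewrite Ma ?Mb // subrr mulr0 addr0.
Qed.

Lemma P1E x : P 1 x = dot x.1 x.1.
Proof. by rewrite /P /= expr1n mulr1. Qed.
Lemma Q1E x : Q 1 x = 1.
Proof. by rewrite /Q /= expr1n mulr1. Qed.

Hypothesis hd : (2 <= d)%N.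

Definition xstar : Vpt d := (ev (d - 1),
  \matrix_(r, c) (if r.+1 == c then 1 else if c.+1 == r then -1 else 0)).

Lemma xstar_V : inV xstar.
Proof.
apply: inV_entryP => i j; rewrite /= !mxE.
case: (eqVneq j.+1 (i : nat)) => h1; case: (eqVneq i.+1 (j : nat)) => h2 //=.
- by move: h1 h2; lia.
- by rewrite opprK.
- by rewrite oppr0.
Qed.

Lemma xstar_L i : Lc i xstar.
Proof.
split=> [j hj|r c hc hr]; rewrite /= !mxE.
  by rewrite (_ : (j == (d - 1)%N :> nat) = false) //; apply/negbTE/eqP; lia.
rewrite (_ : (r.+1 == c) = false); last by apply/negbTE/eqP; lia.
by rewrite (_ : (c.+1 == r) = false) //; apply/negbTE/eqP; lia.
Qed.

Lemma xstar_am j : (j < d)%N -> am xstar j = 1.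
Proof.
move=> hj; rewrite /am; case: eqP => [hj0|hj0].
  have hd0 : (d.-1 < d)%N by lia.
  have := cvE xstar (Ordinal hd0); rewrite /= prednK; last by lia.
  by move=> ->; rewrite !mxE (_ : (d.-1 == (d - 1)%N :> nat) = true) //; apply/eqP; lia.
have h1 : (d - j.+1 < d)%N by lia.
have h2 : (d - j < d)%N by lia.
have e1 : (d - j.+1).+1 = (d - j)%N by lia.
have := cME xstar (Ordinal h1) (Ordinal h2); rewrite /= e1 => ->; rewrite mxE /= e1 eqxx //.
Qed.

Lemma xstar_up c (h : (0 < c)%N) (hc : (c < d)%N) : up xstar (Ordinal hc) = ev c.-1.
Proof.
apply/matrixP => r z; rewrite (ord1 z) !mxE /=.
case: ltnP => hrc.
  case: (eqVneq (r : nat) c.-1) => hr.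
    by rewrite (_ : r.+1 == c) //; apply/eqP; lia.
  rewrite (_ : r.+1 == c = false); last by apply/negbTE/eqP; lia.
  by rewrite (_ : c.+1 == r = false) //; apply/negbTE/eqP; lia.
by rewrite (_ : (r == c.-1 :> nat) = false) //; apply/negbTE/eqP; lia.
Qed.

Lemma Q_xstar k : (1 <= k <= d)%N -> Q k xstar != 0 /\ P k xstar = Q k xstar.
Proof.
case: k => [//|[|i]] hk.
  rewrite P1E Q1E oner_neq0; split=> //.
  have hd0 : (d - 1 < d)%N by lia.
  by rewrite (dot_ev (Ordinal hd0)).
have hid : (i.+2 <= d)%N by lia.
split; first by apply: Q_nz => //; [apply: xstar_V | apply: xstar_L | move=> j hj; rewrite xstar_am ?oner_neq0].
have hc : (d - i.+1 < d)%N by lia.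
rewrite (formula hc xstar_V (xstar_L _) hid) xstar_up; last by lia.
have hc1 : ((d - i.+1).-1 < d)%N by lia.
by rewrite (dot_ev (Ordinal hc1)) mulr1.
Qed.


Lemma act1 x : act 1%:M x = x.
Proof. by rewrite /act trmx1 !mul1mx mulmx1; case: x. Qed.

Lemma orth1 : orth (1%:M : 'M[C]_d).
Proof. by rewrite /orth trmx1 mulmx1. Qed.

Lemma delta_entry A (i j r c : 'I_d) : (A *m delta_mx i j *m A^T) r c = A r i * A c j.
Proof.
rewrite mxE (eq_bigr (fun m => A r i * (m == j)%:R * A c m)); last first.
  move=> m _; rewrite !mxE; congr (_ * _).
  rewrite (eq_bigr (fun l => A r l * (l == i)%:R * (m == j)%:R)); last first.
    by move=> l _; rewrite mxE -mulrA -natrM mulnb.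
  by rewrite -mulr_suml sum_delta_o.
rewrite (eq_bigr (fun m => (A r i * A c m) * (m == j)%:R)); last by move=> m _; ring.
by rewrite sum_delta_o.
Qed.

Lemma orth_col A (j j' : 'I_d) : orth A -> (forall r, r != j -> A r j = 0) ->
  (\sum_l A l j' * A l j) = A j j' * A j j.
Proof.
move=> hA hj; rewrite (bigD1 j) //= big1 ?addr0 // => l hl.
by rewrite hj // mulr0.
Qed.

Lemma orth_entry A (i j : 'I_d) : orth A -> \sum_l A l i * A l j = (i == j)%:R.
Proof.
move=> hA; have := congr1 (fun M : 'M[C]_d => M i j) (orthT hA); rewrite !mxE => <-.
by apply: eq_bigr => l _; rewrite mxE.
Qed.

Lemma stab A : orth A -> (forall x, inV x -> Lc (d - 1) x -> Lc (d - 1) (act A x)) -> inW A.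
Proof.
move=> hA hS.
have hd1 : (d - 1 < d)%N by lia.
pose o := Ordinal hd1.
have diagnz : forall j : 'I_d, (forall r, r != j -> A r j = 0) -> A j j ^+ 2 = 1.
  by move=> j hj; rewrite expr2 -(orth_col j hA hj) orth_entry // eqxx.
have c0 : forall r, r != o -> A r o = 0.
  move=> r hr.
  have hx0 : inV (ev (d - 1), 0 : 'M[C]_d) by apply: inV_entryP => i j; rewrite !mxE oppr0.
  have hL0 : Lc (d - 1) (ev (d - 1), 0 : 'M[C]_d).
    split=> [j hj|r' c hc hr']; last by rewrite mxE.
    by rewrite mxE (_ : (j == (d - 1)%N :> nat) = false) //; apply/negbTE/eqP; lia.
  have [hv _] := hS _ hx0 hL0.
  have e : (A *m ev (d - 1)) r 0 = A r o := mul_ev A o r.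
  have hr' : (r : nat) != (d - 1)%N := hr.
  rewrite -e; apply: hv; move: hr' (ltn_ord r); lia.
have mxB_e : forall (X Y : 'M[C]_d) r c, (X - Y) r c = X r c - Y r c by move=> *; rewrite !mxE.
have key : forall t, (t < d)%N -> forall j : 'I_d, (d - 1 - t <= j)%N -> forall r, r != j -> A r j = 0.
  elim=> [|t IH] ht j hj r hr.
    have -> : j = o by apply: val_inj => /=; have := ltn_ord j; move: hj; lia.
    by apply: c0; rewrite -(_ : j = o) //; apply: val_inj => /=; have := ltn_ord j; move: hj; lia.
  case: (leqP (d - 1 - t) j) => hjt; first exact: IH (ltnW ht) j hjt r hr.
  have hk : (j.+1 < d)%N by lia.
  pose k := Ordinal hk.
  have hkd : forall r, r != k -> A r k = 0 by apply: IH => //=; [lia | lia].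
  have Akk : A k k != 0 by apply/eqP => e; have := diagnz k hkd; rewrite e expr0n /= => /eqP; rewrite eq_sym oner_eq0.
  case: (ltngtP r j) => hrj.
  - pose D := delta_mx j k - delta_mx k j : 'M[C]_d.
    have hxk : inV (0, D).
      apply: inV_entryP => a b; rewrite /D /= !mxE opprB.
      by rewrite (andbC (b == j)) (andbC (b == k)).
    have hLk : Lc (d - 1) (0, D).
      split=> [jj _|r' c hc hr']; first by rewrite mxE.
      rewrite /D /= !mxE.
      rewrite (_ : (r' == j) && (c == k) = false); last first.
        by apply/negbTE/andP => [[/eqP e1 /eqP e2]]; move: hr'; rewrite e1 e2 /=; lia.
      rewrite (_ : (r' == k) && (c == j) = false) ?subrr //.
      by apply/negbTE/andP => [[/eqP e1 /eqP e2]]; move: hr'; rewrite e1 e2 /=; lia.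
    have [_ hM] := hS _ hxk hLk.
    have h1 : (d - (d - 1) < k)%N by rewrite /=; lia.
    have h2 : (r.+1 < k)%N by rewrite /=; lia.
    have := hM r k h1 h2; rewrite /act /= /D mulmxBr mulmxBl mxB_e !delta_entry.
    rewrite (hkd r); last by apply/eqP => e; move: hrj; rewrite e /=; lia.
    by rewrite mul0r subr0 => /eqP; rewrite mulf_eq0 (negbTE Akk) orbF => /eqP.
  - have hr2 : forall r', r' != r -> A r' r = 0 by apply: IH => //=; lia.
    have Arr : A r r != 0 by apply/eqP => e; have := diagnz r hr2; rewrite e expr0n /= => /eqP; rewrite eq_sym oner_eq0.
    have := orth_entry j r hA; rewrite (orth_col j hA hr2).
    rewrite (_ : (j == r) = false); last by apply/negbTE/eqP => e; move: hrj; rewrite e ltnn.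
    by move/eqP; rewrite mulf_eq0 (negbTE Arr) orbF => /eqP.
  - by move: hr; rewrite (_ : r = j) ?eqxx //; apply: val_inj.
have hdp : (d.-1 < d)%N by lia.
have key' : forall i j : 'I_d, i != j -> A i j = 0.
  by move=> i j hij; apply: (key d.-1 hdp) => //; lia.
split=> [i j hij|i]; first exact: key'.
have := diagnz i (fun r hr => key' r i hr); move/eqP; rewrite sqrf_eq1 => /orP [/eqP ->|/eqP ->].
  by left.
by right.
Qed.



Lemma diag_mull B m (X : 'M[C]_(d, m)) i j : inW B -> (B *m X) i j = B i i * X i j.
Proof.
move=> [hB _]; rewrite mxE (bigD1 i) //= big1 ?addr0 // => k hk.
by rewrite hB 1?eq_sym // mul0r.
Qed.

Lemma diag_mulr B (X : 'M[C]_d) i j : inW B -> (X *m B^T) i j = X i j * B j j.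
Proof.
move=> [hB _]; rewrite mxE (bigD1 j) //= big1 ?addr0 ?mxE // => k hk.
by rewrite mxE hB 1?eq_sym // mulr0.
Qed.

Lemma stabW B x : inW B -> Lc (d - 1) x -> Lc (d - 1) (act B x).
Proof.
move=> hB [hv hM]; split=> [j hj|r c hc hr]; rewrite /act /=.
  by rewrite diag_mull // hv // mulr0.
by rewrite diag_mulr // diag_mull // hM // mulr0 mul0r.
Qed.

Lemma inW_tr B : inW B -> inW B^T.
Proof.
move=> [h1 h2]; split=> [i j hij|i]; rewrite mxE; first by apply: h1; rewrite eq_sym.
exact: h2.
Qed.

Lemma pmx_up (c : 'I_d) : pmx (fun z : Vpt d => up z c).
Proof.
move=> i j; apply: (pf_ext (f := fun z => if (i < c)%N then z.2 i c else 0)).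
  by move=> z; rewrite mxE.
by case: ltnP => h; [apply: pf_M | apply: pf_const].
Qed.

Lemma value x i y (hc : (d - i.+1 < d)%N) : inV x -> Lc i.+1 x -> (i.+2 <= d)%N ->
  rat_val (P i.+2) (Q i.+2) x y -> y = dot (up x (Ordinal hc)) (up x (Ordinal hc)).
Proof.
move=> hx hL hid [p' [q' [[pp [pq _]] [heq [hq ->]]]]].
pose F := fun z => dot (up z (Ordinal hc)) (up z (Ordinal hc)).
have pF : polyfun F by apply: pf_dot; apply: pmx_up.
have := @dense (fun z => inV z /\ Lc i.+1 z) (fun z => p' z - F z * q' z) (Q i.+2).
move=> /(_ _ _ _ _ xstar _ _ x (conj hx hL)) => h.
rewrite -[RHS]/(F x) -(mulfK hq (F x)); congr (_ / _); apply/eqP; rewrite -subr_eq0; apply/eqP; apply: h.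
- by move=> a b t [ha La] [hb Lb]; split; [exact: inV_line | exact: line_Lc].
- by apply: pf_line; apply: pf_sub => //; apply: pf_mul.
- exact: pf_line (pf_Q _).
- move=> z [hz Lz] hQ; have := heq z hz; rewrite (formula hc hz Lz hid) => e.
  apply/eqP; rewrite subr_eq0; apply/eqP; apply: (mulfI hQ).
  by rewrite -/(F z) mulrA e mulrC.
- by split; [apply: xstar_V | apply: xstar_L].
- by have [] := Q_xstar (k := i.+2) ltac:(lia).
Qed.


Lemma val_eq p q x y : rat_val p q x y -> inV x -> q x != 0 -> y = p x / q x.
Proof.
move=> [p' [q' [_ [heq [hq' ->]]]]] hx hq; apply/eqP.
by rewrite eqr_div // heq.
Qed.

Definition phiA A (z : Vpt d) := act A^T (sk z).

Lemma val_act k A x y : orth A -> inV x -> rat_val (P k) (Q k) x y -> rat_val (P k) (Q k) (act A x) y.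
Proof.
move=> hA hx [p' [q' [[pp [pq [z0 [hz0 hqz0]]]] [heq [hq ->]]]]].
have hAT := orthT hA.
pose phi := phiA A.
have back : forall z, inV z -> phi (act A z) = z.
  move=> z hz; rewrite /phi /phiA sk_id; last exact: inV_act.
  by rewrite -(act_mul A^T A z) hAT act1.
have p1 : pmx (fun z => (phi z).1) by apply: pmx_mul; [apply: pmx_const | apply: pmx_v].
have p2 : pmx (fun z => (phi z).2).
  by apply: pmx_mul; [apply: pmx_mul; [apply: pmx_const | apply: pmx_skw] | apply: pmx_const].
exists (fun z => p' (phi z)), (fun z => q' (phi z)); split.
  split; first exact: pf_comp.
  split; first exact: pf_comp.
  by exists (act A z0); split; [apply: inV_act | rewrite back].
split; last by rewrite back.
move=> z hz.
have hw : inV (act A^T z) by apply: inV_act.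
have ez : act A (act A^T z) = z by rewrite -act_mul hA act1.
have e1 : phi z = act A^T z by rewrite /phi /phiA sk_id.
have [e2 e3] := PQ_act k hA hw; rewrite ez in e2 e3.
by rewrite e1 e2 e3; apply: heq.
Qed.

Lemma prod_nz (f : nat -> C) :
  (\prod_(1 <= k < d.+1) f k != 0) <-> (forall k, (1 <= k <= d)%N -> f k != 0).
Proof.
rewrite prodf_seq_neq0; split.
  by move=> /allP h k hk; have := h k; rewrite mem_index_iota ltnS => /(_ hk).
by move=> h; apply/allP => k; rewrite mem_index_iota ltnS => /h.
Qed.

Lemma sumF x c (hc : (c < d)%N) :
  \sum_(1 <= k < c.+1) cM x k c.+1 ^+ 2 = dot (up x (Ordinal hc)) (up x (Ordinal hc)).
Proof.
rewrite big_add1 /= big_mkord (big_ord_widen d (fun k => cM x k.+1 c.+1 ^+ 2) (ltnW hc)).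
rewrite /dot big_mkcond /=; apply: eq_bigr => r _; rewrite !mxE /=.
case: ifP => h; last by rewrite mulr0.
by rewrite -(cME x r (Ordinal hc)) expr2.
Qed.

Lemma sum1 x : \sum_(1 <= j < d.+1) cv x j ^+ 2 = dot x.1 x.1.
Proof. by rewrite big_add1 /= big_mkord /dot; apply: eq_bigr => j _; rewrite cvE expr2. Qed.


Lemma rr k : (1 <= k <= d)%N -> ratrep (P k) (Q k).
Proof.
move=> hk; split; first exact: pf_P.
split; first exact: pf_Q.
by exists xstar; split; [apply: xstar_V | have [] := Q_xstar hk].
Qed.

Lemma fpart i : (2 <= i <= d)%N ->
  (exists x, inV x /\ Lsp i.-1 x /\ in_dom (P i) (Q i) x) /\
  (forall x y, inV x -> Lsp i.-1 x -> rat_val (P i) (Q i) x y ->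
     y = \sum_(1 <= k < (d - i + 1).+1) cM x k (d - i + 2) ^+ 2).
Proof.
case: i => [|[|i]] // /andP [_ hid].
have hL : forall x, Lsp i.+1 x <-> Lc i.+1 x by move=> x; apply: Lsp_Lc; lia.
split.
  exists xstar; split; first exact: xstar_V.
  split; first by apply/hL; apply: xstar_L.
  have hk : (1 <= i.+2 <= d)%N by lia.
  exists (P i.+2 xstar / Q i.+2 xstar), (P i.+2), (Q i.+2); split; first exact: rr.
  split; first by move=> z _.
  by have [hq _] := Q_xstar hk.
move=> x y hx /hL hL' hv.
have hc : (d - i.+1 < d)%N by lia.
rewrite (value hc hx hL' hid hv).
have e1 : (d - i.+2 + 1)%N = (d - i.+1)%N by lia.
have e2 : (d - i.+2 + 2)%N = (d - i.+1).+1 by lia.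
by rewrite e1 e2 sumF.
Qed.

End Main.


Theorem proposition3p6 (d : nat) (hd : (2 <= d)%N) :
  exists p q : nat -> Vpt d -> C,
    (forall k, (1 <= k <= d)%N -> ratrep (p k) (q k) /\ rat_invariant (p k) (q k)) /\
    let U := fun x : Vpt d => inV x /\
      exists y : nat -> C, (forall k, (1 <= k <= d)%N -> rat_val (p k) (q k) x (y k)) /\
        \prod_(1 <= k < d.+1) y k != 0 in
    [/\ zariski_open U, (exists x, U x), O_invariant U,
        relative_section U (fun x => inV x /\ Lsp (d - 1) x) (@inW d) &
        [/\ rateq (p 1%N) (q 1%N) (fun x => \sum_(1 <= j < d.+1) cv x j ^+ 2) (fun _ => 1),
            (forall i, (2 <= i < d)%N ->
               (exists x, inV x /\ Lsp i.-1 x /\ in_dom (p i) (q i) x) /\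
               (forall x y, inV x -> Lsp i.-1 x -> rat_val (p i) (q i) x y ->
                  y = \sum_(1 <= k < (d - i + 1).+1) cM x k (d - i + 2) ^+ 2)) &
            (exists x, inV x /\ Lsp (d - 1) x /\ in_dom (p d) (q d) x) /\
            (forall x y, inV x -> Lsp (d - 1) x -> rat_val (p d) (q d) x y ->
                  y = cM x 1 2 ^+ 2)]].
Proof.
exists (fun k => @P d k), (fun k => @Q d k).
split.
  move=> k hk; split; first exact: rr.
  by move=> A hA x hx; have [-> ->] := PQ_act k hA hx.
move=> U.
have hLd : forall x : Vpt d, Lsp (d - 1) x <-> Lc (d - 1) x.
  by move=> x; apply: Lsp_Lc; lia.
split.
-
  exists (fun h => exists p' q' : nat -> Vpt d -> C,
    (forall k, (1 <= k <= d)%N -> ratrep (p' k) (q' k) /\ rateq (P k) (Q k) (p' k) (q' k)) /\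
    h = (fun x => \prod_(1 <= k < d.+1) (p' k x * q' k x))).
  split.
    move=> h [p' [q' [hpq ->]]].
    apply: (pf_ext (f := fun x => \prod_(k <- index_iota 1 d.+1 | k \in index_iota 1 d.+1) (p' k x * q' k x))).
      by move=> x; rewrite -big_seq.
    apply: pf_prod => k; rewrite mem_index_iota ltnS => hk.
    by have [[pp [pq _]] _] := hpq k hk; apply: pf_mul.
  move=> x hx; split.
    move=> [_ [y [hy hp]]].
    have hy0 := proj1 (prod_nz d y) hp.
    have ch : forall k, exists pq : (Vpt d -> C) * (Vpt d -> C), (1 <= k <= d)%N ->
        ratrep pq.1 pq.2 /\ rateq (P k) (Q k) pq.1 pq.2 /\ pq.2 x != 0 /\ y k = pq.1 x / pq.2 x.
      move=> k; case: (boolP (1 <= k <= d)%N) => hk.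
        by have [p' [q' [h1 [h2 [h3 h4]]]]] := hy k hk; exists (p', q').
      by exists ((fun _ => 0), (fun _ => 0)) => hk'; exfalso; move/negP: hk; apply.
    pose f := fun k => proj1_sig (constructive_indefinite_description _ (ch k)).
    have hf : forall k, (1 <= k <= d)%N -> _ := fun k => proj2_sig (constructive_indefinite_description _ (ch k)).
    exists (fun z => \prod_(1 <= k < d.+1) ((f k).1 z * (f k).2 z)); split.
      exists (fun k => (f k).1), (fun k => (f k).2); split => // k hk.
      by have [h1 [h2 _]] := hf k hk.
    apply/prod_nz => k hk; have [_ [_ [h3 h4]]] := hf k hk.
    rewrite mulf_neq0 //; have := hy0 k hk; rewrite h4.
    by apply: contraNneq => ->; rewrite mul0r.
  move=> [h [[p' [q' [hpq ->]]] hne]].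
  have hne' := proj1 (prod_nz d _) hne.
  split => //; exists (fun k => p' k x / q' k x); split.
    move=> k hk; have [hr he] := hpq k hk; exists (p' k), (q' k); do 3! split => //.
    by have := hne' k hk; rewrite mulf_eq0 negb_or => /andP [].
  apply/prod_nz => k hk; have := hne' k hk; rewrite mulf_eq0 negb_or => /andP [h1 h2].
  by rewrite mulf_neq0 ?invr_eq0.
-
  exists (xstar d); split; first exact: xstar_V.
  exists (fun k => P k (xstar d) / Q k (xstar d)); split.
    move=> k hk; exists (P k), (Q k); have [hq _] := Q_xstar hd hk.
    split; first exact: rr.
    by split; first by move=> z _.
  by apply/prod_nz => k hk; have [hq he] := Q_xstar hd hk; rewrite he divff // oner_neq0.
-
  move=> A x hA hx [_ [y [hy hp]]]; split; first exact: inV_act.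
  by exists y; split => // k hk; apply: (val_act hA hx (hy k hk)).
-
  split.
    move=> x hx hU.
    have := hU 1%:M (orth1 d); rewrite act1 => -[_ [y [hy hp]]].
    have hy0 := proj1 (prod_nz d y) hp.
    have claim : forall i, (1 <= i)%N -> (i < d)%N -> exists A, orth A /\ Lc i (act A x).
      elim=> [//|i IH] h1 hid.
      case: i IH h1 hid => [|i] IH _ hid.
        apply: Lbase => //; first by lia.
        have h11 : (1 <= 1 <= d)%N by lia.
        have e := val_eq (hy 1%N h11) hx (eq_ind_r (fun z => z != 0) (oner_neq0 C) (Q1E x)).
        by have := hy0 1%N h11; rewrite e Q1E divr1 P1E.
      have [A [hA hL]] := IH isT (ltnW hid).
      have hc : (d - i.+1 < d)%N by lia.
      have hk : (1 <= i.+2 <= d)%N by lia.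
      have hv := value hd hc (inV_act A hx) hL (ltnW hid) (val_act hA hx (hy i.+2 hk)).
      have [H [hH hL']] := Lstep (hc := hc) (inV_act A hx) hL isT hid (eq_ind _ (fun z => z != 0) (hy0 _ hk) _ hv).
      by exists (H *m A); split; [apply: orth_mul | rewrite act_mul].
    have [A [hA hL]] := claim (d - 1)%N ltac:(lia) ltac:(lia).
    exists A; split => //; split; first exact: inV_act.
    by apply/hLd.
  move=> A hA; split.
    move=> [hS _]; apply: (stab hd hA) => x hx hL.
    by have [_ /hLd] := hS x hx (conj hx (proj2 (hLd x) hL)).
  move=> hW; split.
    move=> x hx [_ /hLd hL]; split; first exact: inV_act.
    by apply/hLd; apply: stabW.
  move=> y hy [_ /hLd hL]; exists (act A^T y); split; first exact: inV_act.
  split; first by split; [apply: inV_act | apply/hLd; apply: stabW => //; apply: inW_tr].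
  by rewrite -act_mul hA act1.
-
  split.
  + by move=> x hx; rewrite P1E Q1E sum1 !mulr1.
  + by move=> i /andP [hi1 hid]; apply: (fpart hd); rewrite hi1 /=; apply: ltnW.
  + have [h1 h2] := fpart hd (i := d) ltac:(lia).
    have e : d.-1 = (d - 1)%N by lia.
    split; first by rewrite -e.
    move=> x y hx hL hv; rewrite (h2 x y hx _ hv); last by rewrite e.
    by rewrite subnn big_nat1.
Qed.
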